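(* Consider a single positioning infrastructure with $N_{\text{anc}}$ anchors providing ranging information, of which $N_{\text{adv}}$ are manipulated by an uncoordinated attacker, and let $N_{\text{min}}$ be the minimum number of anchors required for positioning. Suppose that $N_{\text{anc}}-N_{\text{adv}}>N_{\text{min}}$. Then the true position $\mathbf{p}_{\text{usr}}(t)$ can be recovered (the spoofed subset position estimates can be excluded, leaving benign estimates equal to $\mathbf{p}_{\text{usr}}(t)$).
   Context: Idealized model of subset-based integrity monitoring: a platform at unknown true position $\mathbf{p}_{\text{usr}}(t)\in\mathbb{R}^3$ receives ranging measurements from anchors with known positions (e.g., GNSS satellites, for which $N_{\text{min}}=4$). For every subset of anchors of size at least $N_{\text{min}}$, a position estimate is computed by multilateration. Positioning noise and uncertainties are taken to be negligible (zero) while attacker-induced deviations are preserved, and the anchor geometry is good, so every subset consisting only of benign (non-manipulated) measurements of size at least $N_{\text{min}}$ yields exactly $\mathbf{p}_{\text{usr}}(t)$. ''Uncoordinated spoofing'' means the manipulated ranging values are chosen independently (potentially randomly), so subset estimates involving manipulated measurements are random positions, almost surely inconsistent with the benign position and with each other. $C(n,k)$ denotes the binomial coefficient. *)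

(* Defs.v *)
From mathcomp Require Import all_boot all_order all_algebra.
Set Implicit Arguments. Unset Strict Implicit. Unset Printing Implicit Defensive.

Definition admissible (Nanc Nmin : nat) (S : {set 'I_Nanc}) : bool :=
  Nmin <= #|S|.

Definition benign (Nanc : nat) (A S : {set 'I_Nanc}) : bool :=
  S :&: A == set0.

(* Observable consistency test (does not use the unknown attacked set):
   x is produced as the estimate of at least two distinct admissible subsets. *)
Definition consistent_estimate (R : Type) (Nanc Nmin : nat)
  (est : {set 'I_Nanc} -> R) (x : R) : Prop :=
  exists S S' : {set 'I_Nanc},
    [/\ S != S', admissible Nmin S, admissible Nmin S', est S = x & est S' = x].

(* Main.v *)
Require Import Defs.
From mathcomp Require Import all_boot all_order all_algebra.
From mathcomp Require Import zify.

Local Open Scope ring_scope.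

Theorem lemma1 (R : realFieldType) (Nanc Nadv Nmin : nat)
  (A : {set 'I_Nanc})                         (* manipulated anchors *)
  (p_usr : 'rV[R]_3)                          (* true position at time t *)
  (est : {set 'I_Nanc} -> 'rV[R]_3)           (* subset position estimates *)
  (hA : #|A| = Nadv)
  (* zero noise, good geometry: benign admissible subsets give p_usr *)
  (hbenign : forall S, admissible Nmin S -> benign A S -> est S = p_usr)
  (* uncoordinated spoofing: estimates of subsets involving manipulated
     measurements are inconsistent with the benign position ... *)
  (hspoof_true : forall S, admissible Nmin S -> ~~ benign A S -> est S <> p_usr)
  (* ... and with each other *)
  (hspoof_mut : forall S S', admissible Nmin S -> admissible Nmin S' ->
      ~~ benign A S -> ~~ benign A S' -> S != S' -> est S <> est S')
  (hN : (Nmin < Nanc - Nadv)%N) :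
  (forall x, consistent_estimate Nmin est x <-> x = p_usr) /\
  (forall S, admissible Nmin S -> (est S = p_usr <-> benign A S)).
Proof.
split; last first.
  move=> S hS; split; last exact: hbenign.
  move=> e; apply/negPn/negP => nb; exact: (hspoof_true S hS nb e).
move=> x; split.
  move=> [S [S' [nS hS hS' eS eS']]].
  case: (boolP (benign A S)) => bS; first by rewrite -eS hbenign.
  case: (boolP (benign A S')) => bS'; first by rewrite -eS' hbenign.
  by exfalso; apply: (hspoof_mut S S' hS hS' bS bS' nS); rewrite eS eS'.
move=> ->.
have hC : #|~: A| = (Nanc - Nadv)%N.
  have e := cardsC A; rewrite card_ord hA in e; lia.
have : (0 < #|~: A|)%N by lia.
rewrite card_gt0 => /set0Pn [i hi].
have bC : benign A (~: A) by rewrite /benign setIC setICr.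
have bD : benign A (~: A :\ i).
  rewrite /benign; apply/eqP/setP => j; rewrite !inE.
  by case: (j \in A); rewrite ?andbF ?andbT.
have hD := cardsD1 i (~: A); rewrite hi hC in hD.
exists (~: A), (~: A :\ i); split.
- apply/negP => /eqP e; move: hi; by rewrite {1}e !inE eqxx.
- rewrite /admissible hC; lia.
- rewrite /admissible; lia.
- apply: hbenign => //; rewrite /admissible hC; lia.
- apply: hbenign => //; rewrite /admissible; lia.
Qed.
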